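(* Let $\alpha>0$, $\alpha\neq1$, and consider the system $$\dot u=\frac{uv}{u^2+v^2}-\alpha u,\qquad \dot v=\frac{v^2}{u^2+v^2}-\alpha v+\alpha-1 .$$ Then $$F=u^{\frac{\alpha}{1-\alpha}}\,v^{\frac{1}{\alpha-1}}\Big(\frac{u^2}{v^2}+1\Big)^{\frac{1}{2(\alpha-1)}}-\frac{\alpha\, v\ {}_2F_1\!\left(\frac12,\frac{\alpha}{2(\alpha-1)}+1;\frac32;\frac{v^2}{u^2+v^2}\right)}{(\alpha-1)\sqrt{u^2+v^2}}$$ is a first integral of this system.
   Context: ${}_2F_1(a,b;c;z)$ denotes the Gaussian hypergeometric function. The system is the special case $\alpha=\beta$ of Dixon's system $\dot u=\frac{uv}{u^2+v^2}-\alpha u$, $\dot v=\frac{v^2}{u^2+v^2}-\beta v+\beta-1$. *)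

(* Defs.v *)
From Stdlib Require Import Reals.
From Coquelicot Require Import Coquelicot.
Open Scope R_scope.

Fixpoint poch (a : R) (n : nat) : R :=
  match n with
  | O => 1
  | S k => poch a k * (a + INR k)
  end.

Definition hyp2F1 (a b c z : R) : R :=
  Series (fun n => poch a n * poch b n / (poch c n * INR (Factorial.fact n)) * z ^ n).

(* The vector field of the system (Dixon's system with alpha = beta). *)
Definition udot (alpha u v : R) : R := u * v / (u ^ 2 + v ^ 2) - alpha * u.
Definition vdot (alpha u v : R) : R := v ^ 2 / (u ^ 2 + v ^ 2) - alpha * v + alpha - 1.

Definition Fint (alpha u v : R) : R :=
  Rpower u (alpha / (1 - alpha)) * Rpower v (1 / (alpha - 1))
    * Rpower (u ^ 2 / v ^ 2 + 1) (1 / (2 * (alpha - 1)))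
  - alpha * v * hyp2F1 (1 / 2) (alpha / (2 * (alpha - 1)) + 1) (3 / 2)
                       (v ^ 2 / (u ^ 2 + v ^ 2))
    / ((alpha - 1) * sqrt (u ^ 2 + v ^ 2)).

(* Main.v *)
Require Import Defs.
From Stdlib Require Import Reals Lra.
From Coquelicot Require Import Coquelicot.
Open Scope R_scope.

Lemma CV_disk_radius (a : nat -> R) (r : R) : CV_disk a r -> Rbar_le r (CV_radius a).
Proof. intros H. unfold CV_radius. destruct (Lub_Rbar_correct (CV_disk a)) as [Hub _]. apply Hub; auto. Qed.

Lemma poch_ge0 B n : 0 <= B -> 0 <= poch B n.
Proof. intros HB; induction n; simpl. lra. apply Rmult_le_pos; auto. pose proof (pos_INR n); lra. Qed.

Lemma poch_gt0 B n : 0 < B -> 0 < poch B n.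
Proof. intros HB; induction n; simpl. lra. apply Rmult_lt_0_compat; auto. pose proof (pos_INR n); lra. Qed.

Lemma poch_abs b B n : Rabs b <= B -> Rabs (poch b n) <= poch B n.
Proof. intros HB; induction n; simpl. rewrite Rabs_R1; lra.
 rewrite Rabs_mult. apply Rmult_le_compat; try apply Rabs_pos; auto.
 pose proof (pos_INR n). pose proof (Rabs_triang b (INR n)). rewrite (Rabs_pos_eq (INR n)) in H0; lra. Qed.

Definition Dc (B : R) n := poch B n / INR (Factorial.fact n).

Lemma fact_pos n : 0 < INR (Factorial.fact n).
Proof. apply lt_0_INR. apply Factorial.lt_O_fact. Qed.

Lemma Dc_S B n : Dc B (S n) = Dc B n * (B + INR n) / INR (S n).
Proof. unfold Dc. simpl poch. rewrite fact_simpl, mult_INR.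
  pose proof (fact_pos n). pose proof (pos_INR n). rewrite S_INR. field. lra. Qed.

Lemma Dc_disk B y : 0 < B -> 0 < y < 1 -> ex_series (fun n => Rabs (Dc B n * y ^ n)).
Proof.
 intros HB Hy. apply ex_series_DAlembert with y. lra.
 - intros n. unfold Dc. pose proof (poch_gt0 B n HB). pose proof (fact_pos n).
   pose proof (pow_lt y n ltac:(lra)). apply Rgt_not_eq. apply Rmult_lt_0_compat; auto.
   apply Rdiv_lt_0_compat; auto.
 - apply is_lim_seq_ext with (fun n => y * (1 + (B - 1) * / INR (S n))).
   + intros n. rewrite Dc_S.
     assert (0 < Dc B n) by (unfold Dc; apply Rdiv_lt_0_compat; [apply poch_gt0; auto | apply fact_pos]).
     pose proof (pow_lt y n ltac:(lra)). pose proof (pos_INR n). rewrite S_INR. simpl pow.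
     rewrite Rabs_pos_eq.
     * field. repeat split; apply Rgt_not_eq; try lra; auto.
     * apply Rlt_le; repeat (assumption || apply Rmult_lt_0_compat || apply Rinv_0_lt_compat); try lra; auto.
   + assert (H0 : is_lim_seq (fun n => (B-1) * / INR (S n)) ((B-1)*0)).
     { apply (is_lim_seq_scal_l _ (B-1) (Finite 0)).
       apply (is_lim_seq_inv _ p_infty); [|discriminate].
       apply (is_lim_seq_incr_1 INR). apply is_lim_seq_INR. }
     assert (H1 := is_lim_seq_plus' _ _ _ _ (is_lim_seq_const 1) H0).
     assert (H2 := is_lim_seq_scal_l _ y _ H1). simpl in H2.
     replace (y * (1 + (B-1)*0)) with y in H2 by ring. exact H2.
Qed.

Lemma radius_ge1 (a : nat -> R) B : 0 < B -> (forall n, Rabs (a n) <= Dc B n) ->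
  forall x, Rabs x < 1 -> Rbar_lt (Rabs x) (CV_radius a).
Proof.
  intros HB Ha x Hx. set (y := (Rabs x + 1)/2).
  assert (Hy : 0 < y < 1) by (pose proof (Rabs_pos x); unfold y; lra).
  assert (Hd : CV_disk a y).
  { unfold CV_disk. apply (@ex_series_le R_AbsRing R_CompleteNormedModule _ (fun n => Rabs (Dc B n * y ^ n))).
    - intros n. change (norm (Rabs (a n * y ^ n))) with (Rabs (Rabs (a n * y ^ n))).
      rewrite Rabs_Rabsolu, !Rabs_mult. apply Rmult_le_compat_r. apply Rabs_pos.
      eapply Rle_trans. apply Ha. apply Rle_abs.
    - apply Dc_disk; auto. }
  pose proof (CV_disk_radius _ _ Hd).
  destruct (CV_radius a); simpl in *; auto. unfold y in H. lra.
Qed.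

Section S.
Variable b : R.
Definition gc n := poch b n / INR (Factorial.fact n).
Definition hc n := poch (1/2) n * poch b n / (poch (3/2) n * INR (Factorial.fact n)).

Lemma poch_half n : poch (1/2) n * (2 * INR n + 1) = poch (3/2) n.
Proof. induction n. simpl; lra. simpl poch. rewrite S_INR.
  rewrite <- IHn. field. Qed.

Lemma hc_gc n : hc n * (2 * INR n + 1) = gc n.
Proof. unfold hc, gc. rewrite <- poch_half. pose proof (fact_pos n).
  assert (0 < poch (1/2) n) by (apply poch_gt0; lra). pose proof (pos_INR n).
  field. repeat split; lra. Qed.

Let B := Rabs b + 1.
Lemma gc_bound n : Rabs (gc n) <= Dc B n.
Proof. unfold gc, Dc. unfold Rdiv. rewrite Rabs_mult, Rabs_inv, (Rabs_pos_eq (INR _)).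
  apply Rmult_le_compat_r. apply Rlt_le, Rinv_0_lt_compat, fact_pos.
  apply poch_abs. unfold B; lra. apply pos_INR. Qed.

Lemma hc_bound n : Rabs (hc n) <= Dc B n.
Proof. eapply Rle_trans; [|apply gc_bound]. rewrite <- (hc_gc n), Rabs_mult.
  pose proof (pos_INR n). rewrite (Rabs_pos_eq (2 * INR n + 1)) by lra.
  pose proof (Rabs_pos (hc n)). nra. Qed.

Lemma gc_rad x : Rabs x < 1 -> Rbar_lt (Rabs x) (CV_radius gc).
Proof. apply (radius_ge1 _ B). unfold B; pose proof (Rabs_pos b); lra. apply gc_bound. Qed.
Lemma hc_rad x : Rabs x < 1 -> Rbar_lt (Rabs x) (CV_radius hc).
Proof. apply (radius_ge1 _ B). unfold B; pose proof (Rabs_pos b); lra. apply hc_bound. Qed.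

Lemma gc_S n : INR (S n) * gc (S n) = gc n * (b + INR n).
Proof. unfold gc. simpl poch. rewrite fact_simpl, mult_INR.
  pose proof (fact_pos n). pose proof (pos_INR n). rewrite S_INR. field. lra. Qed.

Lemma g_ode z : Rabs z < 1 -> (1 - z) * PSeries (PS_derive gc) z = b * PSeries gc z.
Proof.
  intros Hz. assert (Hd : ex_pseries (PS_derive gc) z).
  { apply ex_pseries_derive. apply gc_rad; auto. }
  rewrite Rmult_minus_distr_r, Rmult_1_l, <- PSeries_incr_1, <- PSeries_minus; auto.
  2:{ apply ex_pseries_incr_1; auto. }
  rewrite <- PSeries_scal. apply PSeries_ext. intros n.
  unfold PS_minus, PS_scal, PS_derive, PS_incr_1, PS_opp, PS_plus. 
  destruct n.
  - unfold gc. simpl. unfold plus, opp, scal, zero; simpl; unfold mult; simpl. field.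
  - rewrite (gc_S (S n)). set (w := gc (S n)). set (k := INR (S n)).
    unfold plus, opp, scal, zero; simpl; unfold mult; simpl. ring.
Qed.

Lemma g_closed z : 0 <= z < 1 -> PSeries gc z = exp (- b * ln (1 - z)).
Proof.
  intros Hz.
  set (K := fun x => exp (b * ln (1 - x)) * PSeries gc x).
  assert (HK : forall x, 0 <= x <= z -> is_derive K x 0).
  { intros x Hx. assert (Hr : Rabs x < 1) by (rewrite Rabs_pos_eq; lra).
    unfold K. auto_derive.
    - split; [lra|]. split; auto. apply ex_derive_PSeries. apply gc_rad; auto. 
    - rewrite Derive_PSeries by (apply gc_rad; auto).
      pose proof (g_ode x Hr). 
      replace (PSeries (PS_derive gc) x) with (b * PSeries gc x / (1 - x)).
      field. lra. rewrite <- H. field. lra. }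
  destruct (Req_dec z 0) as [->|Hz0].
  - rewrite PSeries_0. unfold gc. simpl. rewrite Rminus_0_r, ln_1, Rmult_0_r, exp_0. field.
  - assert (E : K 0 = K z). { apply eq_is_derive; [|lra]. intros t Ht. apply HK. lra. }
    unfold K in E. rewrite PSeries_0, Rminus_0_r, ln_1, Rmult_0_r, exp_0 in E.
    unfold gc at 1 in E. simpl in E.
    replace (- b * ln (1 - z)) with (- (b * ln (1 - z))) by ring. rewrite exp_Ropp.
    pose proof (exp_pos (b * ln (1 - z))).
    apply (Rmult_eq_reg_l (exp (b * ln (1 - z)))); [|lra]. rewrite <- E. field. lra.
Qed.

Lemma h_rel z : Rabs z < 1 -> PSeries hc z + 2 * (z * PSeries (PS_derive hc) z) = PSeries gc z.
Proof.
  intros Hz. assert (Hd : ex_pseries (PS_derive hc) z) by (apply ex_pseries_derive, hc_rad; auto).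
  rewrite <- PSeries_incr_1, <- PSeries_scal, <- PSeries_plus.
  - apply PSeries_ext. intros n. unfold PS_plus, PS_scal, PS_incr_1, PS_derive.
    destruct n.
    + unfold hc, gc. simpl. unfold plus, scal, zero; simpl; unfold mult; simpl. field.
    + rewrite <- hc_gc. set (w := hc (S n)). rewrite S_INR.
      unfold plus, scal, zero; simpl; unfold mult; simpl. ring.
  - apply CV_radius_inside, hc_rad; auto.
  - apply ex_pseries_scal. apply Rmult_comm. apply ex_pseries_incr_1; auto.
Qed.

Definition Hh z := sqrt z * PSeries hc z.

Lemma Hh_deriv z : 0 < z < 1 -> is_derive Hh z (/ (2 * sqrt z) * exp (- b * ln (1 - z))).
Proof.
  intros Hz. assert (Hr : Rabs z < 1) by (rewrite Rabs_pos_eq; lra).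
  unfold Hh. auto_derive.
  - split; [lra|]. split; auto. apply ex_derive_PSeries. apply hc_rad; auto.
  - rewrite Derive_PSeries by (apply hc_rad; auto).
    rewrite <- g_closed by lra. rewrite <- (h_rel z Hr).
    pose proof (sqrt_lt_R0 z ltac:(lra)).
    assert (sqrt z * sqrt z = z) by (apply sqrt_sqrt; lra).
    field_simplify; [|lra|lra]. replace (sqrt z ^ 2) with z by (simpl; lra). apply f_equal2; [ring|auto].
Qed.
End S.

Section M.
Variable alpha : R.
Hypothesis Ha : 0 < alpha.
Hypothesis Ha1 : alpha <> 1.
Let p := alpha / (alpha - 1).
Let q := 1 / (alpha - 1).
Let bb := alpha / (2 * (alpha - 1)) + 1.

Definition Fs U V := exp (- p * ln U + q / 2 * ln (U ^ 2 + V ^ 2)) - p * Hh bb (V ^ 2 / (U ^ 2 + V ^ 2)).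

Lemma Fint_eq U V : 0 < U -> 0 < V -> Fint alpha U V = Fs U V.
Proof.
  intros HU HV. assert (Ha1' : alpha - 1 <> 0) by lra.
  assert (Ha2 : 1 - alpha <> 0) by lra.
  assert (Hr : 0 < U ^ 2 + V ^ 2) by nra.
  unfold Fint, Fs, Hh. f_equal.
  - unfold Rpower. rewrite <- !exp_plus. f_equal.
    replace (U ^ 2 / V ^ 2 + 1) with ((U ^ 2 + V ^ 2) / V ^ 2) by (field; lra).
    rewrite ln_div, ln_pow by (try apply pow_lt; lra). simpl INR. unfold p, q. field. auto.
  - change (hyp2F1 (1 / 2) (alpha / (2 * (alpha - 1)) + 1) (3 / 2) (V ^ 2 / (U ^ 2 + V ^ 2)))
      with (PSeries (hc bb) (V ^ 2 / (U ^ 2 + V ^ 2))).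
    rewrite sqrt_div by (try apply pow2_ge_0; lra). rewrite sqrt_pow2 by lra.
    pose proof (sqrt_lt_R0 _ Hr). unfold p. field. split; lra.
Qed.

Lemma Fs_deriv (u v : R -> R) t : 0 < u t -> 0 < v t ->
  is_derive u t (udot alpha (u t) (v t)) -> is_derive v t (vdot alpha (u t) (v t)) ->
  is_derive (fun t => Fs (u t) (v t)) t 0.
Proof.
  intros Hu Hv Du Dv.
  assert (Hr0 : 0 < u t * (u t * 1) + v t * (v t * 1)) by nra.
  assert (Hz0 : 0 < v t * (v t * 1) * / (u t * (u t * 1) + v t * (v t * 1)) < 1).
  { split. apply Rmult_lt_0_compat. nra. apply Rinv_0_lt_compat; auto.
    apply (Rmult_lt_reg_r (u t * (u t * 1) + v t * (v t * 1))); auto.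
    rewrite Rmult_assoc, Rinv_l by lra. nra. }
  assert (EH := Hh_deriv bb _ Hz0).
  unfold Fs. auto_derive.
  - repeat split; auto; try (eexists; eassumption); lra.
  - replace (Derive (fun x => u x) t) with (udot alpha (u t) (v t)) by (symmetry; apply is_derive_unique; auto).
    replace (Derive (fun x => v x) t) with (vdot alpha (u t) (v t)) by (symmetry; apply is_derive_unique; auto).
    set (U := u t) in *. set (V := v t) in *.
    replace (U * (U * 1) + V * (V * 1)) with (U ^ 2 + V ^ 2) by ring.
    replace (V * (V * 1)) with (V ^ 2) by ring.
    set (r2 := U ^ 2 + V ^ 2).
    assert (Hr : 0 < r2) by (unfold r2; nra).
    assert (Hz : 0 < V ^ 2 * / r2 < 1).
    { split. apply Rmult_lt_0_compat. apply pow_lt; auto. apply Rinv_0_lt_compat; auto.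
      apply (Rmult_lt_reg_r r2); auto. rewrite Rmult_assoc, Rinv_l by lra. unfold r2. nra. }
    replace (Derive (fun x => Hh bb x) (V ^ 2 * / r2)) with
      (/ (2 * sqrt (V ^ 2 * / r2)) * exp (- bb * ln (1 - V ^ 2 * / r2))).
    2:{ symmetry; apply is_derive_unique. apply Hh_deriv. auto. }
    pose proof (sqrt_lt_R0 _ Hr) as HS.
    replace (sqrt (V ^ 2 * / r2)) with (V / sqrt r2).
    2:{ rewrite <- sqrt_pow2 with V by lra. rewrite <- sqrt_div by (try apply pow2_ge_0; lra). 
        rewrite sqrt_pow2 by lra. reflexivity. }
    replace (ln (1 - V ^ 2 * / r2)) with (2 * ln U - ln r2).
    2:{ replace (1 - V ^ 2 * / r2) with (U * U * / r2) by (unfold r2; field; lra).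
        rewrite ln_mult, ln_mult, ln_Rinv; try lra; try nra. }
    set (X := exp (- bb * (2 * ln U - ln r2))).
    assert (HX : exp (- p * ln U + q / 2 * ln r2) = sqrt r2 * (U * U) * / (r2 * r2) * X).
    { assert (0 < X) by apply exp_pos.
      rewrite <- (exp_ln (sqrt r2 * (U * U) * / (r2 * r2) * X)).
      2:{ repeat apply Rmult_lt_0_compat; auto. apply Rinv_0_lt_compat; nra. }
      f_equal. rewrite !ln_mult; try nra; try apply Rinv_0_lt_compat; try nra.
      rewrite ln_Rinv, ln_mult by nra. unfold X. rewrite ln_exp.
      rewrite <- Rpower_sqrt by auto. unfold Rpower. rewrite ln_exp.
      unfold p, q, bb. field. lra. apply Rmult_lt_0_compat; nra. repeat apply Rmult_lt_0_compat; try nra. apply Rinv_0_lt_compat; nra. }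
    rewrite HX. unfold udot, vdot. unfold p. unfold r2. unfold q. field.
    repeat split; try lra; try nra.
apply Rgt_not_eq; exact HS.
Qed.
End M.

Theorem mainTheorem3 (alpha : R) (Halpha : 0 < alpha) (Halpha1 : alpha <> 1)
  (u v : R -> R) (a b : R) :
  (forall t, a < t < b ->
     0 < u t /\ 0 < v t /\
     is_derive u t (udot alpha (u t) (v t)) /\
     is_derive v t (vdot alpha (u t) (v t))) ->
  forall t s, a < t < b -> a < s < b ->
    Fint alpha (u t) (v t) = Fint alpha (u s) (v s).
Proof.
  intros H.
  assert (K : forall t s, a < t < b -> a < s < b -> t < s ->
             Fs alpha (u t) (v t) = Fs alpha (u s) (v s)).
  { intros t s Ht Hs Hts.
    apply (eq_is_derive (fun x => Fs alpha (u x) (v x))); auto.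
    intros x Hx. destruct (H x ltac:(lra)) as (H1 & H2 & H3 & H4).
    apply (Fs_deriv alpha Halpha Halpha1); auto. }
  intros t s Ht Hs.
  destruct (H t Ht) as (Ht1 & Ht2 & _). destruct (H s Hs) as (Hs1 & Hs2 & _).
  rewrite (Fint_eq alpha Halpha1 (u t) (v t)), (Fint_eq alpha Halpha1 (u s) (v s)) by auto.
  destruct (Rtotal_order t s) as [Hl|[He|Hg]].
  - apply K; auto.
  - subst; reflexivity.
  - symmetry; apply K; auto.
Qed.
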